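(* For every finite graph $G$ and every pair of positive integers $g,k$, there exist a finite graph $G'$ with girth at least $g$ and a surjective homomorphism $h:V(G')\to V(G)$ such that for every proper $k$-colouring $c'$ of $G'$ there is a proper $k$-colouring $c$ of $G$ with $c(v)\in c'(h^{-1}(v))$ for all $v\in V(G)$. In particular $\chi(G')=\chi(G)$.
   Context: A homomorphism from $G'$ to $G$ is a map $h:V(G')\to V(G)$ such that $uv\in E(G')$ implies $h(u)h(v)\in E(G)$. A proper $k$-colouring is a map to $\{1,\dots,k\}$ giving adjacent vertices different colours. For a set $A$ of vertices, $c'(A)$ denotes the set of colours used on $A$. The girth of a graph is the length of its shortest cycle (infinite if acyclic). *)

(* Defs.v *)
From mathcomp Require Import all_boot.
Set Implicit Arguments. Unset Strict Implicit. Unset Printing Implicit Defensive.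

Definition simple_graph (T : finType) (e : rel T) : Prop :=
  symmetric e /\ irreflexive e.

Definition is_cycle (T : finType) (e : rel T) (s : seq T) : Prop :=
  match s with
  | [::] => False
  | x :: s' => 3 <= size s /\ uniq s /\ path e x s' /\ e (last x s') x
  end.

Definition girth_at_least (T : finType) (e : rel T) (g : nat) : Prop :=
  forall s : seq T, is_cycle e s -> g <= size s.

Definition is_hom (T' T : finType) (e' : rel T') (e : rel T) (h : T' -> T) : Prop :=
  forall u v, e' u v -> e (h u) (h v).

Definition proper_colouring (T : finType) (e : rel T) (k : nat) (c : T -> 'I_k) : Prop :=
  forall u v, e u v -> c u != c v.

Definition colourable (T : finType) (e : rel T) (k : nat) : Prop :=
  exists c : T -> 'I_k, proper_colouring e c.

Definition chromatic_number (T : finType) (e : rel T) (chi : nat) : Prop :=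
  colourable e chi /\ forall k, colourable e k -> chi <= k.

(* Main.v *)
Require Import Defs.
From mathcomp Require Import all_boot.
From mathcomp Require Import zify.
Set Implicit Arguments. Unset Strict Implicit. Unset Printing Implicit Defensive.

Lemma ordSS_neq L (a : 'I_L) : 3 <= L -> ordS (ordS a) != a.
Proof.
move=> L3; apply/eqP => /(congr1 val) /=.
have := ltn_ord a; move: (nat_of_ord a) => k kL.
case: (ltngtP k.+1 L) => h.
- rewrite (modn_small h).
  case: (ltngtP k.+2 L) => h2.
  + rewrite (modn_small h2); lia.
  + lia.
  + rewrite h2 modnn; lia.
- lia.
- rewrite h modnn modn_small; lia.
Qed.
Lemma expn_mono a b k : a <= b -> a ^ k <= b ^ k.
Proof. by case: k => // k h; rewrite leq_exp2r. Qed.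

Lemma bern x C : x ^ C * (x + C) <= x * (x + 1) ^ C.
Proof.
elim: C => [|C IH]; first by rewrite !expn0; lia.
have h : x ^ C <= (x + 1) ^ C by case: C {IH} => // C; rewrite leq_exp2r // leq_addr.
rewrite !expnS; nia.
Qed.

Lemma bern4 x C : 3 * x <= C -> 0 < C -> 4 * x ^ C <= (x + 1) ^ C.
Proof.
move=> h1 h2; case: x h1 => [|x] h1; first by rewrite exp0n.
have := bern x.+1 C; rewrite -(leq_pmul2l (ltn0Sn x)); nia.
Qed.

Lemma key_ineq x N D : D = x + 1 -> 2 <= N -> 2 * 2 ^ N * x ^ (3 * D * N) < D ^ (3 * D * N).
Proof.
move=> -> hN.
have b := @bern4 x (3 * (x + 1)) (ltac:(lia)) (ltac:(lia)).
case: x b => [|x] b.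
  rewrite exp1n exp0n ?muln0 //; lia.
rewrite !(expnM _ (3 * (x.+1 + 1)) N).
have h4 : 4 ^ N * (x.+1 ^ (3 * (x.+1 + 1))) ^ N <= ((x.+1 + 1) ^ (3 * (x.+1 + 1))) ^ N.
  rewrite -expnMn; exact: expn_mono.
apply: (leq_trans _ h4).
have p : 0 < (x.+1 ^ (3 * (x.+1 + 1))) ^ N by rewrite !expn_gt0.
rewrite ltn_pmul2r //.
have : 2 ^ 2 <= 2 ^ N by rewrite leq_exp2l.
have -> : 4 ^ N = 2 ^ N * 2 ^ N by rewrite -expnMn.
nia.
Qed.

Section Con.
Variables (T : finType) (e : rel T).
Hypothesis esymm : symmetric e.
Hypothesis eirr : irreflexive e.
Variables (M n g : nat).

Local Notation Ed := {p : (T * T)%type | e p.1 p.2}.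
Local Notation Co := (Ed * bool)%type.
Local Notation Om := {ffun 'I_M -> {ffun Co -> 'I_n.+1}}.
Local Notation Lab := ('I_M * Ed * bool)%type.
Definition ept (j : Ed) (b : bool) : T := if b then (val j).2 else (val j).1.
Definition stc (l : Lab) : ('I_M * Co)%type := (l.1.1, (l.1.2, l.2)).
Definition enc (l : Lab) : ('I_M * Co)%type := (l.1.1, (l.1.2, ~~ l.2)).
Definition vat (w : Om) (c : ('I_M * Co)%type) : 'I_n.+1 := w c.1 c.2.
Definition sv (w : Om) (l : Lab) : ('I_n.+1 * T)%type := (vat w (stc l), ept l.1.2 l.2).
Definition ev (w : Om) (l : Lab) : ('I_n.+1 * T)%type := (vat w (enc l), ept l.1.2 (~~ l.2)).
Definition adj (w : Om) : rel ('I_n.+1 * T) :=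
  fun x y => [exists l, (sv w l == x) && (ev w l == y)].

Lemma ept_neq j b : ept j b != ept j (~~ b).
Proof.
case: j => [[u v] /= h]; rewrite /ept /=; case: b => /=.
- apply/eqP => E; move: h; rewrite E; by rewrite eirr.
- apply/eqP => E; move: h; rewrite E; by rewrite eirr.
Qed.

Lemma ept_e j b : e (ept j b) (ept j (~~ b)).
Proof.
case: j => [[u v] /= h]; rewrite /ept /=; case: b => //=. by rewrite esymm.
Qed.

Lemma adj_sym w : symmetric (adj w).
Proof.
move=> x y; apply/existsP/existsP => -[[[i j] b] /andP [/eqP H1 /eqP H2]];
 exists (i, j, ~~ b); rewrite /sv /ev /stc /enc /= negbK -H1 -H2 /sv /ev /stc /enc /= ?eqxx //.
Qed.

Lemma adj_irr w : irreflexive (adj w).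
Proof.
move=> x; apply/existsP => -[[[i j] b] /andP [/eqP H1 /eqP H2]].
move: H1; rewrite -H2 /sv /ev => /(congr1 snd) /= /eqP; apply/negP; exact: ept_neq.
Qed.

Lemma adj_hom w x y : adj w x y -> e x.2 y.2.
Proof.
move=> /existsP [[[i j] b] /andP [/eqP <- /eqP <-]] /=. exact: ept_e.
Qed.

Definition wit (w : Om) L (t : L.-tuple Lab) : bool :=
  uniq [seq l.1 | l <- t] && [forall i : 'I_L, ev w (tnth t i) == sv w (tnth t (ordS i))].

Lemma uniq_tnth_inj L (t : L.-tuple Lab) : uniq [seq l.1 | l <- t] ->
  injective (fun i : 'I_L => (tnth t i).1).
Proof.
move=> U a b E; apply/ord_inj.
have := @nth_uniq _ (tnth t a).1 [seq l.1 | l <- t] a b.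
rewrite size_map size_tuple => /(_ (ltn_ord a) (ltn_ord b) U).
rewrite !(nth_map (tnth t a)) ?size_tuple // -!tnth_nth /= E eqxx.
by move=> /esym/eqP.
Qed.

Lemma card_Om : #|{: Om}| = n.+1 ^ (M * #|{: Co}|).
Proof. by rewrite card_ffun card_ffun !card_ord -expnM mulnC. Qed.

Lemma enc_inj1 l l' : enc l = enc l' -> l.1 = l'.1.
Proof. by case: l => [[i j] b]; case: l' => [[i' j'] b'] [-> ->]. Qed.

Lemma stc_enc1 l l' : stc l = enc l' -> l.1 = l'.1.
Proof. by case: l => [[i j] b]; case: l' => [[i' j'] b'] [-> ->]. Qed.

Lemma wit_count L (t : L.-tuple Lab) : #|[set w | wit w t]| * n.+1 ^ L <= #|{: Om}|.
Proof.
case U: (uniq [seq l.1 | l <- t]); last first.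
  rewrite (_ : [set w | wit w t] = set0) ?cards0 //.
  by apply/setP => w; rewrite !inE /wit U.
have inj := uniq_tnth_inj U.
pose Z := [set enc (tnth t i) | i : 'I_L].
have cZ : #|Z| = L.
  rewrite card_imset ?card_ord // => a b E; apply: inj.
  exact: enc_inj1.
have stZ : forall i, stc (tnth t i) \notin Z.
  move=> i; apply/imsetP => -[k _ E].
  have E1 : (tnth t i).1 = (tnth t k).1.
    exact: stc_enc1.
  have ik := inj _ _ E1; move: E; rewrite ik /enc /stc.
  by case: (tnth t k) => [[i0 j0] []].
pose phi (w : Om) := [ffun c : {c : ('I_M * Co)%type | c \notin Z} => vat w (val c)].
have : {in [set w | wit w t] &, injective phi}.
  move=> w1 w2; rewrite !inE => /andP [_ /forallP W1] /andP [_ /forallP W2] /ffunP E.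
  have H : forall c, vat w1 c = vat w2 c.
    move=> c; case: (boolP (c \in Z)) => cZ'; last first.
      by have := E (exist _ c cZ'); rewrite !ffunE.
    case/imsetP: cZ' => i _ ->.
    move: (W1 i) (W2 i) => /eqP /(congr1 fst) /= -> /eqP /(congr1 fst) /= ->.
    by have := E (exist (fun c => c \notin Z) _ (stZ (ordS i))); rewrite !ffunE.
  by apply/ffunP => a; apply/ffunP => b; exact: (H (a, b)).
move=> /leq_card_in; rewrite card_ffun card_sig card_ord => Hle.
rewrite card_Om.
have -> : M * #|{: Co}| = #|[pred x | x \notin Z]| + L.
  have cP : #|{: ('I_M * Co)%type}| = M * #|{: Co}| by rewrite card_prod card_ord.
  rewrite -cP -cZ -(cardsC Z) addnC; congr addn; apply: eq_card => x.
  by rewrite !inE.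
by rewrite expnD leq_mul2r Hle orbT.
Qed.

Lemma card_sumb (A : finType) (P : pred A) : #|[set x | P x]| = \sum_x (P x : nat).
Proof.
rewrite -sum1_card big_mkcond /=; apply: eq_bigr => x _; rewrite inE; by case: (P x).
Qed.

Lemma sum_wit L :
  (\sum_(w : Om) #|[set t : L.-tuple Lab | wit w t]|) * n.+1 ^ L <= #|{: Lab}| ^ L * #|{: Om}|.
Proof.
rewrite (eq_bigr (fun w => \sum_(t : L.-tuple Lab) (wit w t : nat))); last first.
  by move=> w _; rewrite card_sumb.
rewrite exchange_big /= big_distrl /=.
rewrite (eq_bigr (fun t => #|[set w | wit w t]| * n.+1 ^ L)); last first.
  by move=> t _; rewrite card_sumb.
apply: leq_trans (_ : \sum_(t : L.-tuple Lab) #|{: Om}| <= _).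
  by apply: leq_sum => t _; exact: wit_count.
rewrite sum_nat_const card_tuple. by [].
Qed.

Definition fstv (w : Om) (s : seq Lab) : 'I_n.+1 := head ord0 [seq (sv w l).1 | l <- s].
Definition Dset (w : Om) : {set 'I_n.+1} :=
  \bigcup_(3 <= L < g) [set fstv w (val t) | t in [set t : L.-tuple Lab | wit w t]].
Definition Nw (w : Om) := \sum_(3 <= L < g) #|[set t : L.-tuple Lab | wit w t]|.

Lemma card_bigcup_seq (I : Type) (A : finType) (r : seq I) (F : I -> {set A}) :
  #|\bigcup_(i <- r) F i| <= \sum_(i <- r) #|F i|.
Proof.
elim: r => [|i r IH]; first by rewrite !big_nil cards0.
rewrite !big_cons; apply: leq_trans (leq_card_setU _ _).1 _; by rewrite leq_add2l.
Qed.

Lemma mem_bigcup_seq (I : eqType) (A : finType) (r : seq I) (F : I -> {set A}) i x :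
  i \in r -> x \in F i -> x \in \bigcup_(j <- r) F j.
Proof.
elim: r => [|j r IH] //; rewrite inE big_cons in_setU => /orP [/eqP <- -> //| /IH H /H ->].
by rewrite orbT.
Qed.

Lemma card_D w : #|Dset w| <= Nw w.
Proof.
apply: leq_trans (card_bigcup_seq _ _) _; apply: leq_sum => L _; exact: leq_imset_card.
Qed.

Lemma girth_ok (w : Om) :
  girth_at_least (fun x y : {x : ('I_n.+1 * T)%type | x.1 \notin Dset w} => adj w (val x) (val y)) g.
Proof.
move=> [|x s'] //= [H3 [U [P Lx]]]; rewrite leqNgt; apply/negP => Hg.
set s := x :: s' in U H3 Hg.
pose L := (size s').+1.
have Adj : forall i : 'I_L, adj w (val (nth x s i)) (val (nth x s (ordS i))).
  move=> i; case: (ltngtP i.+1 L) => h.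
  - have -> : nat_of_ord (ordS i) = i.+1 by rewrite /= modn_small.
    by move/pathP: P => /(_ x i h).
  - by have := ltn_ord i; rewrite ltnNge => /negP; case.
  - have -> : nat_of_ord (ordS i) = 0 by rewrite /= h modnn.
    move: h => [h]; rewrite /s h /= -last_nth; exact: Lx.
have EX : forall i : 'I_L, exists l : Lab,
    sv w l = val (nth x s i) /\ ev w l = val (nth x s (ordS i)).
  move=> i; have /existsP [l /andP [/eqP h1 /eqP h2]] := Adj i.
  by exists l.
have [f Hf] := fin_all_exists EX.
have nthinj : forall a b : 'I_L, val (nth x s a) = val (nth x s b) -> a = b.
  move=> a b /val_inj /eqP; rewrite nth_uniq // => /eqP h; exact: ord_inj.
have finj : injective (fun i => (f i).1).
  move=> a b E.
  case Eb: ((f a).2 == (f b).2).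
    have Efab : f a = f b by move: E (eqP Eb); case: (f a) => ??; case: (f b) => ?? /= -> ->.
    apply: nthinj; by rewrite -(Hf a).1 -(Hf b).1 Efab.
  have h1 : sv w (f a) = ev w (f b).
    move: E Eb; case: (f a) => [p1 b1]; case: (f b) => [p2 b2] /= ->.
    by case: b1; case: b2.
  have h2 : sv w (f b) = ev w (f a).
    move: E Eb; case: (f a) => [p1 b1]; case: (f b) => [p2 b2] /= ->.
    by case: b1; case: b2.
  have ea : a = ordS b by apply: nthinj; rewrite -(Hf a).1 -(Hf b).2 h1.
  have eb : b = ordS a by apply: nthinj; rewrite -(Hf b).1 -(Hf a).2 h2.
  by have := ordSS_neq a H3; rewrite -eb -ea eqxx.
pose t := mktuple f.
have Wt : wit w t.
  apply/andP; split.
    rewrite -(map_tnth_enum t) -map_comp.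
    rewrite (eq_map (g := fun i => (f i).1)); last by move=> i /=; rewrite tnth_mktuple.
    by rewrite map_inj_uniq // enum_uniq.
  apply/forallP => i; rewrite !tnth_mktuple (Hf i).2 (Hf (ordS i)).1 //.
have : fstv w t \in Dset w.
  apply: (mem_bigcup_seq (i := L)).
    by rewrite mem_index_iota H3 Hg.
  by apply/imsetP; exists t => //; rewrite inE.
have -> : fstv w t = (val x).1.
  rewrite /fstv -(map_tnth_enum t) -map_comp enum_ordSl /= tnth_mktuple.
  by have := congr1 fst (Hf ord0).1.
by move: (valP x) => /negP.
Qed.


Definition noCopy (w : Om) (S : {set 'I_n.+1}) := [forall i, ~~ [forall c, w i c \in S]].

Lemma count_noCopy S :
  #|[set w : Om | noCopy w S]| = (n.+1 ^ #|{: Co}| - #|S| ^ #|{: Co}|) ^ M.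
Proof.
pose A := [pred f : {ffun Co -> 'I_n.+1} | ~~ [forall c, f c \in S]].
have -> : [set w : Om | noCopy w S] = [set w | w \in ffun_on A].
  apply/setP => w; rewrite [LHS]inE [RHS]inE /noCopy.
  apply/forallP/ffun_onP => H i; by have := H i.
rewrite cardsE card_ffun_on card_ord; congr (_ ^ _).
have := cardC A; rewrite card_ffun card_ord => <-.
have -> : #|[predC A]| = #|S| ^ #|{: Co}|.
  rewrite -(card_ffun_on _ S); apply: eq_card => f; rewrite !inE negbK.
  apply/forallP/ffun_onP => H c; by have := H c.
by rewrite addnK.
Qed.

Lemma card_bigcup_seqP (I : Type) (A : finType) (r : seq I) (P : pred I) (F : I -> {set A}) :
  #|\bigcup_(i <- r | P i) F i| <= \sum_(i <- r | P i) #|F i|.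
Proof.
elim: r => [|i r IH]; first by rewrite !big_nil cards0.
rewrite !big_cons; case: (P i) => //.
apply: leq_trans (leq_card_setU _ _).1 _; by rewrite leq_add2l.
Qed.

Lemma count_B2 s :
  #|[set w : Om | [exists S : {set 'I_n.+1}, (s <= #|S|) && noCopy w S]]|
    <= 2 ^ n.+1 * (n.+1 ^ #|{: Co}| - s ^ #|{: Co}|) ^ M.
Proof.
have -> : [set w : Om | [exists S : {set 'I_n.+1}, (s <= #|S|) && noCopy w S]] =
  \bigcup_(S : {set 'I_n.+1} | s <= #|S|) [set w : Om | noCopy w S].
  apply/setP => w; rewrite inE; apply/existsP/bigcupP.
  - by move=> [S /andP [h1 h2]]; exists S => //; rewrite inE.
  - by move=> [S h1]; rewrite inE => h2; exists S; rewrite h1.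
apply: leq_trans (card_bigcup_seqP _ _ _) _.
apply: leq_trans (_ : \sum_(S : {set 'I_n.+1}) (n.+1 ^ #|{: Co}| - s ^ #|{: Co}|) ^ M <= _).
  rewrite [X in _ <= X](bigID (fun S : {set 'I_n.+1} => s <= #|S|)) /=.
  apply: leq_trans (leq_addr _ _); apply: leq_sum => S hS.
  rewrite count_noCopy; apply: expn_mono; apply: leq_sub2l; exact: expn_mono.
rewrite sum_nat_const; apply: leq_mul => //.
have -> : #|{: {set 'I_n.+1}}| = #|[set: {set 'I_n.+1}]| by rewrite cardsT.
by rewrite -powersetT card_powerset cardsT card_ord.
Qed.

Lemma good_exists K s C :
  0 < K -> 0 < s -> n.+1 = 2 * K * s -> C = 3 * (2 * K) ^ #|{: Co}| -> M = C * n.+1 ->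
  4 * (\sum_(3 <= L < g) (2 * C * #|{: Ed}|) ^ L) < n.+1 ->
  exists w : Om, 2 * Nw w <= n.+1 /\
    forall S : {set 'I_n.+1}, s <= #|S| -> ~~ noCopy w S.
Proof.
move=> K0 s0 hN hC hM hQ.
set c := #|{: Co}| in hC *.
set B := 2 * C * #|{: Ed}| in hQ.
set Q := \sum_(3 <= L < g) B ^ L in hQ.
have cLab : #|{: Lab}| = B * n.+1.
  rewrite !card_prod card_ord card_bool /B hM.
  rewrite -[LHS]/(C * n.+1 * #|{: Ed}| * 2); lia.
have Om0 : 0 < #|{: Om}| by rewrite card_Om expn_gt0.
have SW : \sum_(w : Om) Nw w <= Q * #|{: Om}|.
  rewrite /Nw exchange_big /= /Q big_distrl /=; apply: leq_sum => L _.
  have := sum_wit L; rewrite cLab expnMn mulnAC leq_pmul2r //; exact: expn_gt0.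
pose B1 := [set w : Om | n.+1 < 2 * Nw w].
have HB1 : 2 * #|B1| < #|{: Om}|.
  have h1 : #|B1| * n.+2 <= 2 * (Q * #|{: Om}|).
    apply: leq_trans (_ : \sum_(w in B1) 2 * Nw w <= _).
      rewrite -sum_nat_const; apply: leq_sum => w; by rewrite inE.
    apply: leq_trans (_ : \sum_(w : Om) 2 * Nw w <= _).
      rewrite [X in _ <= X](bigID (fun w => w \in B1)) /=; exact: leq_addr.
    by rewrite -big_distrr /= leq_mul2l SW orbT.
  nia.
pose B2 := [set w : Om | [exists S : {set 'I_n.+1}, (s <= #|S|) && noCopy w S]].
have HB2 : 2 * #|B2| < #|{: Om}|.
  apply: leq_ltn_trans (leq_mul (leqnn 2) (count_B2 s)) _.
  rewrite card_Om.
  set D := (2 * K) ^ c.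
  have hNc : n.+1 ^ c = D * s ^ c by rewrite hN expnMn.
  rewrite (mulnC M c) expnM hNc.
  rewrite -{2}(mul1n (s ^ c)) -mulnBl !expnMn mulnA mulnA.
  rewrite ltn_pmul2r ?expn_gt0 ?s0 //.
  have -> : M = 3 * D * n.+1 by rewrite hM hC.
  apply: key_ineq => //; first by rewrite subnK // expn_gt0 muln_gt0 K0.
  rewrite hN; nia.
have : #|B1 :|: B2| < #|{: Om}|.
  apply: leq_ltn_trans (leq_card_setU _ _).1 _; lia.
move=> hlt.
have hc : #|B1 :|: B2| + #|~: (B1 :|: B2)| = #|{: Om}| := cardsC _.
have : 0 < #|~: (B1 :|: B2)| by lia.
rewrite card_gt0 => /set0Pn [w].
rewrite !inE negb_or => /andP [h1 h2]; exists w; split; first by rewrite leqNgt.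
move=> S hS; apply/negP => hcp; move/negP: h2; apply; apply/existsP; exists S.
by rewrite hS.
Qed.
End Con.

Set Implicit Arguments. Unset Strict Implicit. Unset Printing Implicit Defensive.

Lemma construct (T : finType) (e : rel T) (g Nmax : nat) :
  simple_graph e ->
  exists (T' : finType) (e' : rel T') (h : T' -> T),
    simple_graph e' /\ girth_at_least e' g /\ is_hom e' e h /\
    (forall v : T, exists u : T', h u = v) /\
    (forall m, m <= Nmax -> forall c' : T' -> 'I_m, proper_colouring e' c' ->
       exists c : T -> 'I_m, proper_colouring e c /\
         (forall v : T, exists u : T', h u = v /\ c' u = c v)).
Proof.
move=> [esymm eirr].
pose c := #|{: ({p : (T * T)%type | e p.1 p.2} * bool)%type}|.
pose K := Nmax.+1 ^ #|T|.
pose C := 3 * (2 * K) ^ c.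
pose B := 2 * C * #|{: {p : (T * T)%type | e p.1 p.2}}|.
pose Q := \sum_(3 <= L < g) B ^ L.
pose s := (4 * Q).+1.
have K0 : 0 < K by rewrite expn_gt0.
pose n := (2 * K * s).-1.
have hN : n.+1 = 2 * K * s by rewrite prednK // !muln_gt0 K0.
pose M := C * n.+1.
have hQ : 4 * Q < n.+1 by rewrite hN; nia.
have [w [hw1 hw2]] := @good_exists T e M n g K s C K0 (ltn0Sn _) hN erefl erefl hQ.
pose D := Dset g w.
pose T' := {x : ('I_n.+1 * T)%type | x.1 \notin D}.
pose e' := fun x y : T' => adj w (val x) (val y).
have cR : K * s <= #|~: D|.
  have := card_D g w; have := cardsC D; rewrite card_ord -/D; lia.
have [x0 Hx0] : exists x0, x0 \in ~: D.
  apply/set0Pn; rewrite -card_gt0; apply: leq_trans cR; by rewrite muln_gt0 K0.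
have Hx0' : x0 \notin D by rewrite inE in Hx0.
exists {x : ('I_n.+1 * T)%type | x.1 \notin D}, e', (fun x => (val x).2).
split; first by split => [x y|x]; [exact: adj_sym | exact: adj_irr].
split; first exact: girth_ok.
split; first by move=> x y; exact: adj_hom.
split; first by move=> v; exists (exist _ (x0, v) Hx0').
move=> m hm c' pc'.
pose p := fun x : 'I_n.+1 => [ffun v => omap c' (insub (x, v) : option T')].
have [f hf] : exists f : {ffun T -> option 'I_m}, s <= #|[set x in ~: D | p x == f]|.
  case: (boolP [exists f : {ffun T -> option 'I_m}, s <= #|[set x in ~: D | p x == f]|])
    => [/existsP //|/existsPn H]; exfalso.
  have H' : forall f, #|[set x in ~: D | p x == f]| <= s.-1.
    by move=> f; have := H f; rewrite -ltnNge; lia.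
  have e1 : #|~: D| = \sum_(f : {ffun T -> option 'I_m}) #|[set x in ~: D | p x == f]|.
    rewrite -sum1_card (partition_big p xpredT) //=; apply: eq_bigr => f _.
    by rewrite -sum1_card; apply: eq_bigl => x; rewrite !inE.
  have : #|~: D| <= #|{: {ffun T -> option 'I_m}}| * s.-1.
    by rewrite e1 -sum_nat_const; apply: leq_sum => f _; exact: H'.
  have cF : #|{: {ffun T -> option 'I_m}}| <= K.
    by rewrite card_ffun card_option card_ord; apply: expn_mono.
  have : #|{: {ffun T -> option 'I_m}}| * s.-1 <= K * s.-1 by rewrite leq_mul2r cF orbT.
  have : K * s.-1 < K * s by rewrite ltn_pmul2l.
  lia.
pose S := [set x in ~: D | p x == f].
have /forallPn [i] := hw2 S hf; rewrite negbK => /forallP Hi.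
have [y0 Hy0] : exists y0, y0 \in S.
  by apply/set0Pn; rewrite -card_gt0; apply: leq_trans hf.
have Hy0D : y0 \notin D by move: Hy0; rewrite !inE => /andP [].
pose col := fun v => c' (exist _ (y0, v) Hy0D).
have key : forall (x : ('I_n.+1 * T)%type) (hx : x.1 \in S) (hxD : x.1 \notin D),
    c' (exist _ x hxD) = col x.2.
  move=> [x v] /= hx hxD.
  have : p x = p y0.
    by move: hx Hy0; rewrite !inE => /andP [_ /eqP ->] /andP [_ /eqP ->].
  move/ffunP => /(_ v); rewrite !ffunE (@insubT _ (fun z : ('I_n.+1 * T)%type => z.1 \notin D) T' (x, v) hxD).
  rewrite (@insubT _ (fun z : ('I_n.+1 * T)%type => z.1 \notin D) T' (y0, v) Hy0D) /=.
  by case.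
exists col; split; last first.
  by move=> v; exists (exist _ (y0, v) Hy0D).
move=> u v huv.
pose j : {p : (T * T)%type | e p.1 p.2} := exist _ (u, v) huv.
have h1 : w i (j, false) \in S := Hi (j, false).
have h2 : w i (j, true) \in S := Hi (j, true).
have h1D : (w i (j, false), u).1 \notin D by move: h1; rewrite !inE => /andP [].
have h2D : (w i (j, true), v).1 \notin D by move: h2; rewrite !inE => /andP [].
have Ad : e' (exist (fun z : ('I_n.+1 * T)%type => z.1 \notin D) _ h1D)
               (exist (fun z : ('I_n.+1 * T)%type => z.1 \notin D) _ h2D).
  rewrite /e' /adj; apply/existsP; exists (i, j, false).
  by rewrite /sv /ev /vat /stc /enc /ept /= !eqxx.
have := pc' _ _ Ad.
by rewrite (key (_, u) h1 h1D) (key (_, v) h2 h2D).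
Qed.

Theorem mainTheorem7 (T : finType) (e : rel T) (g k : nat) :
  simple_graph e -> 0 < g -> 0 < k ->
  exists (T' : finType) (e' : rel T') (h : T' -> T),
    simple_graph e' /\
    girth_at_least e' g /\
    is_hom e' e h /\
    (forall v : T, exists u : T', h u = v) /\
    (forall c' : T' -> 'I_k, proper_colouring e' c' ->
       exists c : T -> 'I_k, proper_colouring e c /\
         (forall v : T, exists u : T', h u = v /\ c' u = c v)) /\
    (forall chi : nat, chromatic_number e chi <-> chromatic_number e' chi).
Proof.
move=> sg g0 k0.
have [T' [e' [h [sg' [gir [hom [surj col]]]]]]] := construct g (maxn k #|T|) sg.
exists T', e', h; do 4 (split => //).
split.
  by move=> c' pc'; apply: col => //; rewrite leq_maxl.
have eqc : forall m, colourable e m <-> colourable e' m.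
  move=> m; split.
  - move=> [c pc]; exists (fun x => c (h x)) => u v /hom; exact: pc.
  - move=> [c' pc']; case: (leqP m (maxn k #|T|)) => hm.
      by have [c [pc _]] := col m hm c' pc'; exists c.
    have hT : #|T| <= m by apply: leq_trans (ltnW hm); rewrite leq_maxr.
    exists (fun v => widen_ord hT (enum_rank v)) => u v huv.
    apply/negP => /eqP /(congr1 val) /= /val_inj /enum_rank_inj E.
    by move: huv; rewrite E (proj2 sg).
move=> chi; rewrite /chromatic_number; split.
- move=> [c1 c2]; split; first by apply/eqc.
  by move=> m /eqc; exact: c2.
- move=> [c1 c2]; split; first by apply/eqc.
  by move=> m /eqc; exact: c2.
Qed.
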